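(* Let $P$ be a distribution on $\mathcal{X}$, $R>0$, $K>0$. Then $E_e(P,R,K,0)=E_e(P,R,K)$, where \[ E_e(P,R,K,0)=\min\Big\{\min_{TV\widetilde{V}:\; B_{T\widetilde{V}}\le B_{TV}\le K} F(TV,T\widetilde{V}),\ \min_{TV\widetilde{V}:\; B_{TV}\ge K} F(TV,T\widetilde{V})\Big\}, \] \[ F(TV,T\widetilde{V})=D(TV\|PW)+\big|A_{T\widetilde{V}}-R+|B_{T\widetilde{V}}-K|^{+}\big|^{+}, \] and \[ E_e(P,R,K)=\min_{TV}\Big\{D(TV\|PW)+\big|A_{TV}-R+|B_{TV}-K|^{+}\big|^{+}\Big\}. \]
   Context: $\mathcal{X},\mathcal{Y}$ are finite alphabets and $W(y|x)$ is a conditional distribution on $\mathcal{Y}$ given $\mathcal{X}$. Logs are natural. $TV$, $T\widetilde{V}$ denote joint distributions on $\mathcal{Y}\times\mathcal{X}$ with common $\mathcal{Y}$-marginal $T$ and conditionals $V(x|y)$, $\widetilde{V}(x|y)$; minima are over all such distributions. $PW$ is the joint distribution $P(x)W(y|x)$; $D(TV\|PW)=\sum T(y)V(x|y)\log\frac{T(y)V(x|y)}{P(x)W(y|x)}$; $A_{TV}=\sum T(y)V(x|y)\log\frac{V(x|y)}{P(x)}$; $B_{TV}=\mathbb{E}_{TV}[-\log W(Y|X)]$; $|t|^{+}=\max\{0,t\}$. *)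

(* Defs.v *)
From HB Require Import structures.
From mathcomp Require Import all_boot all_order all_algebra.
From mathcomp Require Import all_classical all_reals.
From mathcomp Require Import ereal exp.
Set Implicit Arguments. Unset Strict Implicit. Unset Printing Implicit Defensive.
Import Order.TTheory GRing.Theory Num.Theory.
Local Open Scope classical_set_scope.
Local Open Scope ring_scope.

Section Defs.
Variables (R : realType) (X Y : finType).

Definition is_distr (T : finType) (p : T -> R) : Prop :=
  (forall t, 0 <= p t) /\ \sum_t p t = 1.

(* W(y|x) written W x y: a channel *)
Definition is_channel (W : X -> Y -> R) : Prop := forall x, is_distr (W x).

(* joint distributions Q on Y x X; Q (y,x) = T(y) V(x|y) *)
Definition ymarg (Q : Y * X -> R) (y : Y) : R := \sum_x Q (y, x).

Definition xlogxy (a b : R) : \bar R :=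
  if a == 0 then 0%E else if b == 0 then +oo%E else (a * ln (a / b))%:E.

Definition xnlog (a b : R) : \bar R :=
  if a == 0 then 0%E else if b == 0 then +oo%E else (- (a * ln b))%:E.

Definition Ddiv (P : X -> R) (W : X -> Y -> R) (Q : Y * X -> R) : \bar R :=
  (\sum_(i : Y * X) xlogxy (Q i) (P i.2 * W i.2 i.1))%E.

(* A_{TV} = sum T(y) V(x|y) log (V(x|y) / P(x)) ; V(x|y) = Q(y,x)/T(y) *)
Definition Aterm (P : X -> R) (Q : Y * X -> R) : \bar R :=
  (\sum_(i : Y * X) xlogxy (Q i) (ymarg Q i.1 * P i.2))%E.

Definition Bterm (W : X -> Y -> R) (Q : Y * X -> R) : \bar R :=
  (\sum_(i : Y * X) xnlog (Q i) (W i.2 i.1))%E.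

Definition posp (t : \bar R) : \bar R := maxe t 0%E.

Definition Fobj (P : X -> R) (W : X -> Y -> R) (Rt K : R)
    (Q Q' : Y * X -> R) : \bar R :=
  (Ddiv P W Q + posp (Aterm P Q' - Rt%:E + posp (Bterm W Q' - K%:E)))%E.

(* pairs (TV, T~V): joint distributions with common Y-marginal T *)
Definition same_T_pair (p : (Y * X -> R) * (Y * X -> R)) : Prop :=
  is_distr p.1 /\ is_distr p.2 /\ ymarg p.1 = ymarg p.2.

Definition Ee0 (P : X -> R) (W : X -> Y -> R) (Rt K : R) : \bar R :=
  mine
    (ereal_inf ((fun p => Fobj P W Rt K p.1 p.2) @`
       [set p | same_T_pair p /\
                (Bterm W p.2 <= Bterm W p.1)%E /\ (Bterm W p.1 <= K%:E)%E]))
    (ereal_inf ((fun p => Fobj P W Rt K p.1 p.2) @`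
       [set p | same_T_pair p /\ (K%:E <= Bterm W p.1)%E])).

Definition Ee (P : X -> R) (W : X -> Y -> R) (Rt K : R) : \bar R :=
  ereal_inf ((fun Q => Fobj P W Rt K Q Q) @` [set Q | is_distr Q]).

End Defs.

(* Main.v *)
Require Import Defs.
From mathcomp Require Import all_boot all_order all_algebra.
From mathcomp Require Import all_classical all_reals.
From mathcomp Require Import ereal exp lra ring.
Import Order.TTheory GRing.Theory Num.Theory.
Local Open Scope ring_scope.
Lemma posp_ge0 {R : realType} (x : \bar R) : (0 <= posp x)%E.
Proof. by rewrite /posp le_max lexx orbT. Qed.
Lemma posp_ny {R : realType} (x : \bar R) : posp x != -oo%E.
Proof. by apply/negP => /eqP E; have := posp_ge0 x; rewrite E. Qed.
Lemma posp_y {R : realType} : posp (+oo%E : \bar R) = +oo%E.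
Proof. by rewrite /posp maxye. Qed.
Lemma posE {R : realType} (x : R) : posp x%:E = (Num.max x 0)%:E.
Proof. by rewrite /posp -EFin_max. Qed.

Lemma real_key (R : realType) (h a1 b1 a2 b2 r k : R) :
  (b2 <= b1 /\ b1 <= k) \/ (k <= b1) ->
  h + a1 + b1 + Num.max (a1 - r + Num.max (b1 - k) 0) 0 <=
    h + a1 + b1 + Num.max (a2 - r + Num.max (b2 - k) 0) 0 \/
  h + a2 + b2 + Num.max (a2 - r + Num.max (b2 - k) 0) 0 <=
    h + a1 + b1 + Num.max (a2 - r + Num.max (b2 - k) 0) 0.
Proof.
move=> H.
have M : forall x : R, Num.max x 0 = x /\ 0 <= x \/ Num.max x 0 = 0 /\ x <= 0.
  move=> x; unfold Num.Def.maxr; case: ifP => hx.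
    by right; split => //; apply: ltW.
  by left; split => //; rewrite leNgt hx.
case: (M (b1 - k)) => [[? ?]|[? ?]];
case: (M (b2 - k)) => [[? ?]|[? ?]];
case: (M (a1 - r + Num.max (b1 - k) 0)) => [[? ?]|[? ?]];
case: (M (a2 - r + Num.max (b2 - k) 0)) => [[? ?]|[? ?]];
 (case: (lerP (a1 + b1) (a2 + b2)) => ?; [left|right]; lra).
Qed.

Lemma ext_key (R : realType) (h r k : R) (a1 b1 a2 b2 : \bar R) :
 a1 != -oo%E -> b1 != -oo%E -> a2 != -oo%E -> b2 != -oo%E ->
 ((b2 <= b1 /\ b1 <= k%:E) \/ (k%:E <= b1))%E ->
 (h%:E + a1 + b1 + posp (a1 - r%:E + posp (b1 - k%:E)) <=
    h%:E + a1 + b1 + posp (a2 - r%:E + posp (b2 - k%:E)))%E \/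
 (h%:E + a2 + b2 + posp (a2 - r%:E + posp (b2 - k%:E)) <=
    h%:E + a1 + b1 + posp (a2 - r%:E + posp (b2 - k%:E)))%E.
Proof.
case: a1 => [a1||] //; case: b1 => [b1||] //; case: a2 => [a2||] //; case: b2 => [b2||] // _ _ _ _ H.
all: rewrite ?(=^~EFinB, =^~EFinD, posE).
all: rewrite ?(=^~EFinB, =^~EFinD, posE).
all: rewrite ?(=^~EFinB, =^~EFinD, posE).
all: rewrite ?(addye, addey, posp_y) //= ?posp_ny //.
all: rewrite ?(addye, addey, posp_y) //= ?posp_ny //.
all: rewrite ?(addye, addey, posp_y) //= ?posp_ny //.
all: try (by left; rewrite leey).
rewrite !lee_fin; apply: real_key; move: H; rewrite !lee_fin.
by [].
Qed.

Lemma adde_nny {R : realType} (x y : \bar R) :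
  x != -oo%E -> y != -oo%E -> (x + y)%E != -oo%E.
Proof. by case: x => [x||] //; case: y => [y||]. Qed.

Lemma sum_nny {R : realType} (I : finType) (F : I -> \bar R) :
  (forall i, F i != -oo%E) -> (\sum_i F i)%E != -oo%E.
Proof.
move=> HF; elim/big_ind: _ => //; first by move=> x y; apply: adde_nny.
Qed.

Lemma xlogxy_nny {R : realType} (a b : R) : xlogxy a b != -oo%E.
Proof. by rewrite /xlogxy; case: ifP => //; case: ifP. Qed.

Lemma xnlog_nny {R : realType} (a b : R) : xnlog a b != -oo%E.
Proof. by rewrite /xnlog; case: ifP => //; case: ifP. Qed.

Section Main.
Variables (R : realType) (X Y : finType).

Definition Hm (Q : Y * X -> R) : R := \sum_i Q i * ln (ymarg Q i.1).

Lemma HmE (Q : Y * X -> R) : Hm Q = \sum_y ymarg Q y * ln (ymarg Q y).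
Proof.
have -> : Hm Q = \sum_y \sum_x Q (y, x) * ln (ymarg Q y).
  by rewrite /Hm pair_bigA; apply: eq_bigr => -[y x].
by apply: eq_bigr => y _; rewrite /ymarg mulr_suml.
Qed.

Lemma Ddec (W : X -> Y -> R) (P : X -> R) (Q : Y * X -> R) :
  is_channel W -> is_distr P -> is_distr Q ->
  Ddiv P W Q = ((Hm Q)%:E + Aterm P Q + Bterm W Q)%E.
Proof.
move=> HW [HP _] [HQ _].
rewrite /Ddiv /Aterm /Bterm /Hm -sumEFin -!big_split /=.
apply: eq_bigr => i _.
have HT : Q i <= ymarg Q i.1.
  rewrite /ymarg (bigD1 i.2) //= -surjective_pairing lerDl.
  by apply: sumr_ge0 => ? _.
have HWi : 0 <= W i.2 i.1 by case: (HW i.2) => ->.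
have HPi := HP i.2.
have HQi := HQ i.
rewrite /xlogxy /xnlog.
case: eqP => [->|/eqP q0]; first by rewrite mul0r !adde0.
have qp : 0 < Q i by rewrite lt_def q0.
have Tp : 0 < ymarg Q i.1 by apply: lt_le_trans HT.
have T0 : ymarg Q i.1 != 0 by rewrite gt_eqF.
case: (eqVneq (P i.2) 0) => [->|P0].
  rewrite !(mul0r, mulr0) eqxx.
  by case: ifP => _ //; case: ifP.
case: (eqVneq (W i.2 i.1) 0) => [->|W0].
  by rewrite !(mul0r, mulr0) eqxx (negbTE (mulf_neq0 T0 P0)) addey.
rewrite (negbTE (mulf_neq0 P0 W0)) (negbTE (mulf_neq0 T0 P0)).
have Pp : 0 < P i.2 by rewrite lt_def P0.
have Wp : 0 < W i.2 i.1 by rewrite lt_def W0.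
rewrite -!EFinD; congr (_%:E).
rewrite !ln_div ?lnM ?posrE ?mulr_gt0 //.
by ring.
Qed.

End Main.

Theorem lemma4 (R : realType) (X Y : finType) (W : X -> Y -> R) (P : X -> R)
    (Rt K : R) :
  is_channel W -> is_distr P -> 0 < Rt -> 0 < K ->
  Ee0 P W Rt K = Ee P W Rt K.
Proof.
move=> HW HP _ _.
apply/eqP; rewrite eq_le; apply/andP; split.
  apply/ereal_infP => _ [Q HQ <-].
  rewrite ge_min; apply/orP.
  case/orP: (le_total (Bterm W Q) K%:E) => hb; [left|right];
    apply: ereal_inf_lbound; exists (Q, Q) => //; split => //; split => //.
have key : forall Q1 Q2 : Y * X -> R, same_T_pair (Q1, Q2) ->
  ((Bterm W Q2 <= Bterm W Q1 /\ Bterm W Q1 <= K%:E) \/ (K%:E <= Bterm W Q1))%E ->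
  (Ee P W Rt K <= Fobj P W Rt K Q1 Q2)%E.
  move=> Q1 Q2 [/= H1 [H2 Hm]] Hc.
  have E1 : (Ee P W Rt K <= Fobj P W Rt K Q1 Q1)%E.
    by apply: ereal_inf_lbound; exists Q1.
  have E2 : (Ee P W Rt K <= Fobj P W Rt K Q2 Q2)%E.
    by apply: ereal_inf_lbound; exists Q2.
  move: E1 E2; rewrite /Fobj !Ddec // (HmE _ _ _ Q1) (HmE _ _ _ Q2) Hm => E1 E2.
  have nA : forall Q : Y * X -> R, Aterm P Q != -oo%E.
    by move=> Q; have := (@sum_nny R _ (fun i => xlogxy (Q i) (ymarg Q i.1 * P i.2)) (fun i => xlogxy_nny _ _)).
  have nB : forall Q : Y * X -> R, Bterm W Q != -oo%E.
    by move=> Q; have := (@sum_nny R _ (fun i => xnlog (Q i) (W i.2 i.1)) (fun i => xnlog_nny _ _)).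
  have [h|h] := @ext_key _ (\sum_y ymarg Q2 y * ln (ymarg Q2 y)) Rt K _ _ _ _
    (nA Q1) (nB Q1) (nA Q2) (nB Q2) Hc.
    exact: le_trans E1 h.
  exact: le_trans E2 h.
rewrite le_min; apply/andP; split; apply/ereal_infP => _ [[Q1 Q2] [HT Hc] <-];
  apply: key => //; by [left | right].
Qed.
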